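(* Let $\mathcal{X}=\mathcal{X}_1\times\cdots\times\mathcal{X}_n$ and $\mathcal{Y}=\mathcal{Y}_1\times\cdots\times\mathcal{Y}_m$ be finite sets. If $$1+\sum_{j\in[m]}(|\mathcal{Y}_j|-1)\;\geq\;|\mathcal{X}|\Big/\max_{i\in[n]}|\mathcal{X}_i|,$$ then $\operatorname{RBM}_{\mathcal{X},\mathcal{Y}}$ is a universal approximator, i.e., every probability distribution on $\mathcal{X}$ can be approximated arbitrarily well by distributions from $\operatorname{RBM}_{\mathcal{X},\mathcal{Y}}$.
   Context: For a finite product set $\mathcal{Z}=\mathcal{Z}_1\times\cdots\times\mathcal{Z}_k$, fix in each $\mathcal{Z}_i$ a reference state $z_i^0$ and let $F^{\mathcal{Z}}(z)=\big(1,(\mathbb{1}[z_i=a])_{i\in[k],\,a\in\mathcal{Z}_i\setminus\{z_i^0\}}\big)^\top$ be the sufficient statistics of the independence model on $\mathcal{Z}$. The restricted Boltzmann machine model $\operatorname{RBM}_{\mathcal{X},\mathcal{Y}}$ is the set of probability distributions on $\mathcal{X}$ of the form $p(x)=\frac{1}{Z(\Theta)}\sum_{y\in\mathcal{Y}}\exp\big(F^{\mathcal{X}}(x)^\top\Theta F^{\mathcal{Y}}(y)\big)$, $x\in\mathcal{X}$, for all real matrices $\Theta$ of the appropriate size, with $Z(\Theta)$ the normalizing constant. ''Approximated arbitrarily well'' means lying in the topological closure of the model within the probability simplex on $\mathcal{X}$. *)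

(* Defs.v *)
From HB Require Import structures.
From mathcomp Require Import all_boot all_order all_algebra.
From mathcomp Require Import reals.
From mathcomp Require Import sequences exp.
Set Implicit Arguments. Unset Strict Implicit. Unset Printing Implicit Defensive.
Import Order.TTheory GRing.Theory Num.Theory.
Local Open Scope ring_scope.

Definition state (k : nat) (d : 'I_k -> nat) : finType :=
  {dffun forall i : 'I_k, 'I_(d i)}.

(* Index set of the sufficient statistics F^Z: the constant coordinate [None]
   and one coordinate (i, a) for each i and each non-reference state a of Z_i. *)
Definition feat_idx (k : nat) (d : 'I_k -> nat) (z0 : forall i, 'I_(d i))
  : finType :=
  option {ia : {i : 'I_k & 'I_(d i)} | tagged ia != z0 (tag ia)}.

Definition suff_stat (R : realType) (k : nat) (d : 'I_k -> nat)
  (z0 : forall i, 'I_(d i)) (z : state d) (c : feat_idx z0) : R :=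
  match c with
  | None => 1
  | Some ia => if z (tag (val ia)) == tagged (val ia) then 1 else 0
  end.

Definition rbm_weight (R : realType) (n m : nat) (dX : 'I_n -> nat)
  (dY : 'I_m -> nat) (x0 : forall i, 'I_(dX i)) (y0 : forall j, 'I_(dY j))
  (Theta : feat_idx x0 -> feat_idx y0 -> R) (x : state dX) : R :=
  \sum_(y : state dY)
     expR (\sum_(a : feat_idx x0) \sum_(b : feat_idx y0)
             suff_stat R x a * Theta a b * suff_stat R y b).

Definition rbm (R : realType) (n m : nat) (dX : 'I_n -> nat)
  (dY : 'I_m -> nat) (x0 : forall i, 'I_(dX i)) (y0 : forall j, 'I_(dY j))
  (Theta : feat_idx x0 -> feat_idx y0 -> R) (x : state dX) : R :=
  rbm_weight Theta x / \sum_(x' : state dX) rbm_weight Theta x'.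

Definition is_distribution (R : realType) (T : finType) (p : T -> R) : Prop :=
  (forall x, 0 <= p x) /\ \sum_(x : T) p x = 1.

(* Main.v *)
Require Import Defs.
From HB Require Import structures.
From mathcomp Require Import all_boot all_order all_algebra.
From mathcomp Require Import reals.
From mathcomp Require Import sequences exp.
From mathcomp Require Import ring lra.
Import Order.TTheory GRing.Theory Num.Theory.
Local Open Scope ring_scope.
Set Implicit Arguments. Unset Strict Implicit. Unset Printing Implicit Defensive.

Section Feat.
Variables (R : realType) (k : nat) (d : 'I_k -> nat) (z0 : forall i, 'I_(d i)).

Definition theta (g : forall i, 'I_(d i) -> R) (c : feat_idx z0) : R :=
  match c with
  | None => \sum_i g i (z0 i)
  | Some ia => g (tag (val ia)) (tagged (val ia)) - g (tag (val ia)) (z0 (tag (val ia)))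
  end.

Lemma sum_option (F : feat_idx z0 -> R) :
  \sum_c F c = F None + \sum_ia F (Some ia).
Proof.
rewrite (bigD1 None) //=; congr (_ + _).
rewrite (reindex_omap Some id) /=; last by case.
by apply: eq_bigl => ia; rewrite eqxx.
Qed.

Lemma sum_sig (P : pred {i : 'I_k & 'I_(d i)}) (F : {i : 'I_k & 'I_(d i)} -> R) :
  \sum_(ia : {u | P u}) F (val ia) = \sum_(u | P u) F u.
Proof.
rewrite [RHS](reindex_omap (val : {u | P u} -> _) insub) /=; last first.
  by move=> u Pu; rewrite insubT.
apply: eq_bigl => ia; rewrite (valP ia) /= valK eqxx //.
Qed.

Lemma theta_spec (g : forall i, 'I_(d i) -> R) (z : state d) :
  \sum_c suff_stat R z c * theta g c = \sum_i g i (z i).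
Proof.
rewrite sum_option /= mul1r.
pose F (u : {i : 'I_k & 'I_(d i)}) : R :=
  (if z (tag u) == tagged u then 1 else 0) * (g (tag u) (tagged u) - g (tag u) (z0 (tag u))).
have -> : \sum_(ia : {ia : {i : 'I_k & 'I_(d i)} | tagged ia != z0 (tag ia)})
   suff_stat R z (Some ia) * theta g (Some ia) = \sum_(ia : {ia : {i : 'I_k & 'I_(d i)} | tagged ia != z0 (tag ia)}) F (val ia) by [].
rewrite sum_sig.
have -> : \sum_(u | tagged u != z0 (tag u)) F u = \sum_u F u.
  rewrite [RHS](bigID (fun u : {i : 'I_k & 'I_(d i)} => tagged u != z0 (tag u))) /= [X in _ = _ + X]big1 ?addr0 //.
  by move=> u; rewrite negbK /F => /eqP ->; rewrite subrr mulr0.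
pose G (i : 'I_k) (a : 'I_(d i)) : R := (if z i == a then 1 else 0) * (g i a - g i (z0 i)).
have -> : \sum_u F u = \sum_i \sum_(j < d i) G i j.
  rewrite (@sig_big_dep _ _ _ _ (fun i => 'I_(d i)) xpredT (fun _ _ => true) G) /=.
  by apply: eq_bigr => u _.
have -> : \sum_i \sum_(j < d i) G i j = \sum_i (g i (z i) - g i (z0 i)).
  apply: eq_bigr => i _; rewrite (bigD1 (z i)) //= /G eqxx mul1r big1 ?addr0 //.
  by move=> a; rewrite eq_sym => /negbTE ->; rewrite mul0r.
by rewrite sumrB addrC subrK.
Qed.
End Feat.

Lemma tagI (k : nat) (d : 'I_k -> nat) (u v : {i : 'I_k & 'I_(d i)}) :
  tag u = tag v -> val (tagged u) = val (tagged v) -> u = v.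
Proof.
case: u => i a; case: v => j b /= eij; subst j => /val_inj -> //.
Qed.

Lemma sum_le_one (R : realType) (I : finType) (P : pred I) (F : I -> R) j :
  (forall i, P i -> F i <= 0) -> P j -> \sum_(i | P i) F i <= F j.
Proof.
move=> h hj; rewrite (bigD1 j) //= gerDl.
by apply: sumr_le0 => i /andP [] /h.
Qed.

Lemma sum_le_two (R : realType) (I : finType) (P : pred I) (F : I -> R) j c U :
  P j -> j != c -> (forall i, P i -> i != c -> F i <= 0) -> F c <= U -> 0 <= U ->
  \sum_(i | P i) F i <= F j + U.
Proof.
move=> hj hjc h hc hU; rewrite (bigD1 j) //= lerD2l.
apply: (@le_trans _ _ (\sum_(i | P i && (i != j)) (if i == c then U else 0))).
  apply: ler_sum => i /andP [Pi _]; case: eqP => [->//|/eqP nic]; exact: h.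
rewrite big_mkcond /= [X in _ <= X](_ : U = \sum_i (if i == c then U else 0)).
  by apply: ler_sum => i; case: ifP => _ //; case: ifP.
by rewrite -big_mkcond big_pred1_eq.
Qed.

Lemma sum_le_const (R : realType) (I : finType) (P : pred I) (F : I -> R) K :
  0 <= K -> (forall i, P i -> F i <= K) -> \sum_(i | P i) F i <= #|I|%:R * K.
Proof.
move=> hK h; apply: (@le_trans _ _ (\sum_(i | P i) K)); first exact: ler_sum.
rewrite big_mkcond /= (@le_trans _ _ (\sum_(i : I) K)) //.
  by apply: ler_sum => i; case: ifP.
by rewrite sumr_const mulr_natl.
Qed.

Section Main.
Variables (R : realType) (n m : nat) (dX : 'I_n -> nat) (dY : 'I_m -> nat)
  (x0 : forall i, 'I_(dX i)) (y0 : forall j, 'I_(dY j)) (ist : 'I_n).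

Definition rep (x : state dX) : state dX :=
  [ffun i => if i == ist then x0 i else x i].
Definition upd (l : state dX) (k : nat) : state dX :=
  [ffun i => if i == ist then insubd (l i) k else l i].
Definition l0 : state dX := [ffun i => x0 i].
Definition Lset := [set x : state dX | rep x == x].
Definition Lset' := Lset :\ l0.
Definition M (x l : state dX) : R := \sum_(i | i != ist) (if x i != l i then 1 else 0).

Lemma repE x i : rep x i = if i == ist then x0 i else x i.
Proof. by rewrite /rep ffunE. Qed.

Lemma rep_in x : rep x \in Lset.
Proof. by rewrite /Lset inE; apply/eqP/ffunP => i; rewrite !repE; case: (i == ist). Qed.

Lemma l0_in : l0 \in Lset.
Proof. by rewrite /Lset inE; apply/eqP/ffunP => i; rewrite repE /l0 !ffunE; case: eqP => // ->. Qed.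

Lemma M_rep x l : M x l = M (rep x) l.
Proof. by apply: eq_bigr => i /negbTE hi; rewrite repE hi. Qed.

Lemma M_ge0 x l : 0 <= M x l.
Proof. by apply: sumr_ge0 => i _; case: ifP. Qed.

Lemma M_self x : M x (rep x) = 0.
Proof. by apply: big1 => i /negbTE hi; rewrite repE hi eqxx. Qed.

Lemma M_ge1 x l : l \in Lset -> l != rep x -> 1 <= M x l.
Proof.
rewrite /Lset inE => /eqP hl hne.
have [i hi] : exists i, l i != rep x i.
  apply/existsP; apply: contraR hne => /existsPn h; apply/eqP/ffunP => i.
  by move: (h i); rewrite negbK => /eqP.
have hist : i != ist.
  apply: contra hi => /eqP ->; rewrite -hl !repE eqxx //.
have hx : (x i != l i) = true.
  by rewrite repE (negbTE hist) in hi; rewrite eq_sym hi.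
rewrite /M (bigD1 i) //= hx lerDl.
by apply: sumr_ge0 => j _; case: ifP.
Qed.

Lemma updK x : upd (rep x) (val (x ist)) = x.
Proof.
apply/ffunP => i; rewrite /upd ffunE; case: eqP => [->|/eqP hi].
  by apply: val_inj; rewrite val_insubd ltn_ord.
by rewrite repE (negbTE hi).
Qed.

Lemma rep_upd l (a : 'I_(dX ist)) : l \in Lset -> rep (upd l (val a)) = l.
Proof.
rewrite /Lset inE => /eqP hl; rewrite -{2}hl; apply/ffunP => i; rewrite !repE /upd ffunE.
by case: (i == ist).
Qed.

Lemma upd_ist l (a : 'I_(dX ist)) : upd l (val a) ist = a.
Proof. by apply: val_inj; rewrite /upd ffunE eqxx val_insubd ltn_ord. Qed.

Lemma card_Lset : (#|Lset| * dX ist <= #|state dX|)%N.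
Proof.
pose f (p : {l : state dX | l \in Lset} * 'I_(dX ist)) := upd (val p.1) (val p.2).
have finj : injective f.
  move=> [[l1 h1] a1] [[l2 h2] a2]; rewrite /f /= => e.
  have ea : a1 = a2 by rewrite -(upd_ist l1 a1) e upd_ist.
  subst a2; congr (_, _); apply: val_inj => /=.
  by rewrite -(rep_upd a1 h1) e rep_upd.
have := leq_card f finj.
by rewrite card_prod card_sig card_ord.
Qed.

Definition Hs : finType := {ia : {j : 'I_m & 'I_(dY j)} | tagged ia != y0 (tag ia)}.
Definition act (y : state dY) (ia : Hs) : bool := y (tag (val ia)) == tagged (val ia).
Definition y0f : state dY := [ffun j => y0 j].
Definition ystar (c : Hs) : state dY :=
  [ffun j => if j == tag (val c) then insubd (y0 j) (val (tagged (val c))) else y0 j].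

Lemma act_y0 ia : act y0f ia = false.
Proof. by rewrite /act /y0f ffunE; apply/negbTE; rewrite eq_sym (valP ia). Qed.

Lemma exists_act y : y != y0f -> exists ia, act y ia.
Proof.
move=> hne.
have [j hj] : exists j, y j != y0 j.
  apply/existsP; apply: contraR hne => /existsPn h; apply/eqP/ffunP => j.
  by move: (h j); rewrite negbK /y0f ffunE => /eqP.
exists (Sub (Tagged (fun j => 'I_(dY j)) (y j)) hj : Hs).
by rewrite /act /=.
Qed.

Lemma act_ystar c ia : act (ystar c) ia = (ia == c).
Proof.
rewrite /act /ystar ffunE.
case: ia => [[j b] hb]; case: c => [[j' b'] hb'] /=.
case: (j =P j') => [ej|nej].
  subst j'.
  have -> : insubd (y0 j) (val b') = b' by apply: val_inj; rewrite val_insubd ltn_ord.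
  apply/eqP/eqP => [e|e].
    by subst b; apply: val_inj.
  have := congr1 (fun u : Hs => val (tagged (val u))) e => /= /val_inj ->//.
have -> : (y0 j == b) = false by apply/negbTE; rewrite eq_sym.
apply/esym/negbTE; apply/negP => /eqP e.
by apply: nej; have := congr1 (fun u : Hs => tag (val u)) e.
Qed.

Definition mkH (y : state dY) (j : 'I_m) (h : y j != y0 j) : Hs :=
  Sub (Tagged (fun j => 'I_(dY j)) (y j)) h.

Lemma act_mkH y j h : act y (@mkH y j h).
Proof. by rewrite /act /=. Qed.

Lemma exists_act2 y c : y != y0f -> y != ystar c -> exists ia, act y ia && (ia != c).
Proof.
move=> hne hne2.
have [j hj] : exists j, y j != y0 j.
  apply/existsP; apply: contraR hne => /existsPn h; apply/eqP/ffunP => j.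
  by move: (h j); rewrite negbK /y0f ffunE => /eqP.
case: (eqVneq (mkH hj) c) => [ec|nec]; last by exists (mkH hj); rewrite act_mkH nec.
have [j2 hj2] : exists j2, y j2 != ystar c j2.
  apply/existsP; apply: contraR hne2 => /existsPn h; apply/eqP/ffunP => j2.
  by move: (h j2); rewrite negbK => /eqP.
subst c.
have nj : j2 != j.
  apply/eqP => e; subst j2; move: hj2; rewrite /ystar ffunE /= eqxx.
  by rewrite (_ : insubd _ _ = y j) ?eqxx //; apply: val_inj; rewrite val_insubd ltn_ord.
have hj2' : y j2 != y0 j2 by move: hj2; rewrite /ystar ffunE /= (negbTE nj).
exists (mkH hj2'); rewrite act_mkH /=.
apply/eqP => e; have := congr1 (fun u : Hs => tag (val u)) e => /= ej.
by rewrite ej eqxx in nj.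
Qed.
Lemma card_Hs : #|Hs| = (\sum_(j < m) (dY j - 1))%N.
Proof.
rewrite /Hs card_sig -sum1_card.
transitivity (\sum_(j < m) \sum_(b : 'I_(dY j) | b != y0 j) 1)%N.
  rewrite (@sig_big_dep nat 0%N addn _ (fun j => 'I_(dY j)) xpredT (fun j b => b != y0 j) (fun _ _ => 1%N)) /=.
  by apply: eq_bigl => u; rewrite !inE.
apply: eq_bigr => j _.
rewrite sum1_card subn1; have := cardC1 (y0 j); rewrite card_ord => <-; apply: eq_card => b.
by rewrite !inE.
Qed.
Definition assoc (ia : Hs) : option (state dX) :=
  if (enum_rank ia < #|Lset'|)%N then Some (nth l0 (enum Lset') (enum_rank ia)) else None.

Lemma assoc_in ia l : assoc ia = Some l -> l \in Lset'.
Proof.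
rewrite /assoc; case: ifP => // h [<-].
by rewrite -mem_enum; apply: mem_nth; rewrite -cardE.
Qed.

Lemma assoc_ex l : (#|Lset'| <= #|Hs|)%N -> l \in Lset' -> exists ia, assoc ia = Some l.
Proof.
move=> hc hl.
have hk : (index l (enum Lset') < #|Lset'|)%N by rewrite cardE index_mem mem_enum.
have hk' : (index l (enum Lset') < #|Hs|)%N by apply: leq_trans hc.
exists (enum_val (Ordinal hk')).
by rewrite /assoc enum_valK /= hk nth_index // mem_enum.
Qed.

Lemma assoc_inj ia ib l : assoc ia = Some l -> assoc ib = Some l -> ia = ib.
Proof.
rewrite /assoc; case: ifP => // ha [<-]; case: ifP => // hb [] /eqP.
rewrite nth_uniq ?enum_uniq -?cardE // => /eqP e.
by apply: enum_rank_inj; apply: val_inj.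
Qed.

Lemma rep_rep x : rep (rep x) = rep x.
Proof. by have := rep_in x; rewrite /Lset inE => /eqP. Qed.

Variables (L : state dX -> R) (T : R).

Definition V (k : nat) := L (upd l0 k).
Definition Bt (l : state dX) (k : nat) := L (upd l k) - L (upd l0 k).
Definition gen (f : nat -> R) (l : state dX) (P : R) : forall i, 'I_(dX i) -> R :=
  fun i a => if i == ist then f (val a) else if a != l i then P else 0.
Arguments gen : clear implicits.

Lemma gen_sum f l P (x : state dX) : \sum_i gen f l P i (x i) = f (val (x ist)) + P * M x l.
Proof.
rewrite (bigD1 ist) //= /gen eqxx; congr (_ + _).
rewrite /M mulr_sumr; apply: eq_bigr => i /negbTE ->.
by case: ifP; rewrite ?mulr1 ?mulr0.
Qed.

Definition gcol (b : feat_idx y0) : forall i, 'I_(dX i) -> R :=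
  match b with
  | None => gen V l0 (- T)
  | Some ia => match assoc ia with
     | Some l => gen (fun k => Bt l k + T * M l l0) l (- ((M l l0 + 1) * T))
     | None => gen (fun _ => - T) l0 0
     end
  end.

Arguments gcol : clear implicits.

Definition Theta (a : feat_idx x0) (b : feat_idx y0) : R := theta (gcol b) a.

Definition S (b : feat_idx y0) (x : state dX) : R := \sum_i gcol b i (x i).

Definition E (x : state dX) (y : state dY) : R :=
  \sum_(a : feat_idx x0) \sum_(b : feat_idx y0)
     suff_stat R x a * Theta a b * suff_stat R y b.

Lemma weightE x : rbm_weight Theta x = \sum_y expR (E x y).
Proof. by []. Qed.

Lemma E_spec x y : E x y = S None x + \sum_(ia | act y ia) S (Some ia) x.
Proof.
rewrite /E exchange_big /=.
have -> : \sum_(b : feat_idx y0) \sum_(a : feat_idx x0) suff_stat R x a * Theta a b * suff_stat R y b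
   = \sum_(b : feat_idx y0) S b x * suff_stat R y b.
  apply: eq_bigr => b _.
  by rewrite -mulr_suml theta_spec.
rewrite sum_option /= mulr1; congr (_ + _); rewrite [RHS]big_mkcond /=.
by apply: eq_bigr => ia _; rewrite /act; case: ifP; rewrite ?mulr1 ?mulr0.
Qed.

Lemma S_None x : S None x = V (val (x ist)) - T * M x l0.
Proof. by rewrite /S /= gen_sum mulNr. Qed.

Lemma S_assoc ia l x : assoc ia = Some l ->
  S (Some ia) x = Bt l (val (x ist)) + T * M l l0 - (M l l0 + 1) * T * M x l.
Proof. by move=> h; rewrite /S /= h gen_sum mulNr. Qed.

Lemma S_noassoc ia x : assoc ia = None -> S (Some ia) x = - T.
Proof. by move=> h; rewrite /S /= h gen_sum mul0r addr0. Qed.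
Variable B0 : R.
Hypothesis hL : forall z, `|L z| <= B0.
Hypothesis hT : 2 * B0 <= T.
Hypothesis hc : (#|Lset'| <= #|Hs|)%N.

Lemma L_bnd z : - B0 <= L z <= B0.
Proof. by rewrite -ler_norml. Qed.

Lemma B0_ge0 : 0 <= B0.
Proof. exact: le_trans (normr_ge0 _) (hL l0). Qed.

Lemma V_le k : V k <= B0.
Proof. by case/andP: (L_bnd (upd l0 k)). Qed.

Lemma Bt_le l k : Bt l k <= 2 * B0.
Proof.
case/andP: (L_bnd (upd l k)) => h1 h2; case/andP: (L_bnd (upd l0 k)) => h3 h4.
rewrite /Bt; lra.
Qed.

Lemma S_bad x ia : assoc ia != Some (rep x) -> S (Some ia) x <= 2 * B0 - T.
Proof.
have hB := B0_ge0; have hT' := hT.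
case h: (assoc ia) => [l|] hne; last by rewrite S_noassoc //; lra.
rewrite (S_assoc x h).
have hl : l \in Lset by have := assoc_in h; rewrite in_setD1 => /andP [].
have hM : 1 <= M x l.
  by apply: M_ge1 => //; apply: contra hne => /eqP ->.
have hk := M_ge0 l l0.
have hb := Bt_le l (val (x ist)).
have hT0 : 0 <= T by lra.
have : 0 <= (M l l0 + 1) * T * (M x l - 1).
  by apply: mulr_ge0; [apply: mulr_ge0; lra | lra].
lra.
Qed.

Lemma E_good0 x : rep x = l0 -> E x y0f = L x.
Proof.
move=> e; rewrite E_spec big_pred0; last by move=> ia; rewrite act_y0.
rewrite addr0 S_None -e M_self mulr0 subr0 /V -e updK //.
Qed.

Lemma E_bad0 x y : rep x = l0 -> y != y0f -> E x y <= 3 * B0 - T.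
Proof.
move=> e hy; have [ia hia] := exists_act hy; have hT' := hT.
rewrite E_spec.
have h1 : \sum_(ib | act y ib) S (Some ib) x <= S (Some ia) x.
  apply: sum_le_one => // ib _; have hB := B0_ge0.
  apply: (@le_trans _ _ (2 * B0 - T)); [apply: S_bad | lra].
  apply/negP => /eqP h; have := assoc_in h; rewrite e in_setD1 eqxx //.
have h2 : S (Some ia) x <= 2 * B0 - T.
  apply: S_bad; apply/negP => /eqP h; have := assoc_in h; rewrite e in_setD1 eqxx //.
have h3 : S None x <= B0.
  rewrite S_None -e M_self mulr0 subr0; exact: V_le.
lra.
Qed.

Lemma E_good1 x c : assoc c = Some (rep x) -> E x (ystar c) = L x.
Proof.
move=> hc'; rewrite E_spec.
rewrite (eq_bigl (fun ia => ia == c)); last by move=> ia; rewrite act_ystar.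
rewrite big_pred1_eq S_None (S_assoc x hc') M_self M_rep /Bt /V.
have hx : L (upd (rep x) (val (x ist))) = L x by rewrite updK.
rewrite mulr0 subr0; lra.
Qed.

Lemma E_bad1 x c y : rep x != l0 -> assoc c = Some (rep x) -> y != ystar c ->
  E x y <= 5 * B0 - T.
Proof.
move=> hx hc' hy; have hB := B0_ge0; have hT' := hT.
have hk : 1 <= M (rep x) l0.
  by apply: M_ge1; [exact: l0_in | rewrite rep_rep eq_sym].
have hv := V_le (val (x ist)).
rewrite E_spec.
case: (eqVneq y y0f) => [ey|ney].
  rewrite big_pred0; last by move=> ia; rewrite ey act_y0.
  rewrite S_None M_rep addr0.
  have hT0 : 0 <= T by lra.
  have : T <= T * M (rep x) l0 by rewrite -{1}(mulr1 T) ler_wpM2l.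
  lra.
have [ia /andP [hia hne]] := exists_act2 ney hy.
have hsc : S (Some c) x <= 2 * B0 + T * M (rep x) l0.
  rewrite (S_assoc x hc') M_self mulr0 subr0.
  have := Bt_le (rep x) (val (x ist)); lra.
have hT0 : 0 <= T by lra.
have hU : 0 <= 2 * B0 + T * M (rep x) l0.
  have : 0 <= T * M (rep x) l0 by apply: mulr_ge0 => //; apply: M_ge0.
  lra.
have h2 : \sum_(ib | act y ib) S (Some ib) x <= S (Some ia) x + (2 * B0 + T * M (rep x) l0).
  apply: (@sum_le_two R Hs (act y) (fun ib => S (Some ib) x) ia c _ hia hne) => // ib _ hib.
  apply: (@le_trans _ _ (2 * B0 - T)); [apply: S_bad | lra].
  by apply: contra hib => /eqP h; apply/eqP; apply: (assoc_inj h hc').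
have h3 : S (Some ia) x <= 2 * B0 - T.
  by apply: S_bad; apply: contra hne => /eqP h; apply/eqP; apply: (assoc_inj h hc').
rewrite S_None M_rep.
lra.
Qed.

Lemma energy_main x : exists yg, E x yg = L x /\ forall y, y != yg -> E x y <= 5 * B0 - T.
Proof.
have hB := B0_ge0; have hT' := hT.
case: (eqVneq (rep x) l0) => [e|ne].
  exists y0f; split; first exact: E_good0.
  by move=> y hy; apply: (@le_trans _ _ (3 * B0 - T)); [exact: E_bad0 | lra].
have hin : rep x \in Lset' by rewrite in_setD1 ne rep_in.
have [c hc'] := assoc_ex hc hin.
exists (ystar c); split; first exact: E_good1.
by move=> y hy; exact: (E_bad1 ne hc' hy).
Qed.

Lemma weight_bounds x :
  expR (L x) <= rbm_weight Theta x <= expR (L x) + #|state dY|%:R * expR (5 * B0 - T).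
Proof.
have [yg [hg hb]] := energy_main x.
rewrite weightE (bigD1 yg) //= hg; apply/andP; split.
  by rewrite lerDl; apply: sumr_ge0 => y _; apply: ltW; apply: expR_gt0.
rewrite lerD2l; apply: sum_le_const; first exact: ltW (expR_gt0 _).
by move=> y hy; rewrite ler_expR; apply: hb.
Qed.
End Main.

Lemma weight_pos (R : realType) n m (dX : 'I_n -> nat) (dY : 'I_m -> nat)
  (x0 : forall i, 'I_(dX i)) (y0 : forall j, 'I_(dY j))
  (Th : feat_idx x0 -> feat_idx y0 -> R) x : 0 < rbm_weight Th x.
Proof.
rewrite /rbm_weight (bigD1 (y0f y0)) //=.
set a := expR _; set b := \sum_(y | _) _.
have ha : 0 < a by apply: expR_gt0.
have hb : 0 <= b by apply: sumr_ge0 => y _; apply: ltW; apply: expR_gt0.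
lra.
Qed.

Lemma n0_case (R : realType) m (dX : 'I_0 -> nat) (dY : 'I_m -> nat)
  (x0 : forall i, 'I_(dX i)) (y0 : forall j, 'I_(dY j))
  (p : state dX -> R) (Th : feat_idx x0 -> feat_idx y0 -> R) :
  is_distribution p -> forall x, rbm Th x = p x.
Proof.
move=> [_ p1] x.
have uq : forall x' : state dX, x' = x.
  by move=> x'; apply/ffunP => -[i hi]; exfalso; rewrite ltn0 in hi.
have sx : forall f : state dX -> R, \sum_x' f x' = f x.
  move=> f; rewrite (bigD1 x) //= big_pred0 ?addr0 // => x'.
  by rewrite (uq x') eqxx.
have px : p x = 1 by rewrite -p1 sx.
rewrite /rbm sx px divff //; apply: lt0r_neq0; exact: weight_pos.
Qed.

Unset Implicit Arguments.
Set Strict Implicit.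

Theorem corollary2 (R : realType) (n m : nat)
  (dX : 'I_n -> nat) (dY : 'I_m -> nat)
  (x0 : forall i : 'I_n, 'I_(dX i)) (y0 : forall j : 'I_m, 'I_(dY j)) :
  (#|state dX|%:R / (\max_(i < n) dX i)%:R
     <= (1 + \sum_(j < m) (dY j - 1))%N%:R :> R) ->
  forall p : state dX -> R, is_distribution p ->
  forall eps : R, 0 < eps ->
  exists Theta : feat_idx x0 -> feat_idx y0 -> R,
    forall x : state dX, `|p x - rbm Theta x| < eps.
Proof.
move=> hcond p [p0 p1] eps he.
case: (posnP n) => [n0|npos].
  subst n; exists (fun _ _ => 0) => x.
  by rewrite (@n0_case _ _ _ _ _ _ p _ (conj p0 p1)) subrr normr0.
have := @bigop.eq_bigmax _ (fun i : 'I_n => dX i); rewrite card_ord => /(_ npos) [ist hist].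
rewrite hist in hcond.
have hD : (0 < dX ist)%N by apply: leq_ltn_trans (leq0n _) (ltn_ord (x0 ist)).
have hN : (0 < #|state dX|)%N by apply/card_gt0P; exists (l0 x0).
have hNY : (0 < #|state dY|)%N by apply/card_gt0P; exists (y0f y0).
have hc : (#|Lset' x0 ist| <= #|Hs y0|)%N.
  have h1 := card_Lset x0 ist.
  have h2 : (#|Lset x0 ist| <= 1 + \sum_(j < m) (dY j - 1))%N.
    rewrite -(ler_nat R); apply: le_trans hcond.
    by rewrite ler_pdivlMr ?ltr0n // -natrM ler_nat.
  by move: h2; rewrite (cardsD1 (l0 x0)) l0_in card_Hs leq_add2l.
set N := #|state dX|; set NY := #|state dY|.
have hNr : 1 <= N%:R :> R by rewrite ler1n.
have hNYr : 0 < NY%:R :> R by rewrite ltr0n.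
pose c := eps / (eps + 4).
have c0 : 0 < c by apply: divr_gt0 => //; lra.
have c4 : c <= eps / 4.
  rewrite /c ler_pdivrMr; last lra.
  have -> : eps / 4 * (eps + 4) = eps + eps * eps / 4 by field.
  have : 0 <= eps * eps / 4 by apply: divr_ge0 => //; apply: mulr_ge0; lra.
  lra.
have c1 : c < 1 by rewrite /c ltr_pdivrMr; lra.
have ple1 : forall x, p x <= 1.
  move=> x; rewrite -p1 (bigD1 x) //= lerDl; exact: sumr_ge0.
pose q x := (1 - c) * p x + c / N%:R.
have hN0 : 0 < N%:R :> R by lra.
have q0 : forall x, 0 < q x.
  move=> x; rewrite /q; have := p0 x => hp.
  have : 0 < c / N%:R by apply: divr_gt0.
  have : 0 <= (1 - c) * p x by apply: mulr_ge0; lra.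
  lra.
have qsum : \sum_x q x = 1.
  rewrite /q big_split /= -mulr_sumr p1 mulr1 sumr_const -/N.
  rewrite -[c / N%:R *+ N]mulr_natr divfK; [lra | exact: lt0r_neq0].
have iN : c / N%:R <= c.
  by rewrite ler_pdivrMr // ler_pMr.
have hpq : forall x, - (2 * c) <= p x - q x <= 2 * c.
  move=> x; rewrite /q; have := p0 x; have := ple1 x => h1 h2.
  have : 0 <= c / N%:R by apply: divr_ge0; lra.
  have : 0 <= c * p x <= c by rewrite mulr_ge0 ?ler_piMr //; lra.
  move=> /andP [h3 h4] h5.
  have -> : p x - ((1 - c) * p x + c / N%:R) = c * p x - c / N%:R by ring.
  apply/andP; split; lra.
pose L x := ln (q x).
pose B0 := \sum_x `|L x|.
have hL : forall z, `|L z| <= B0.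
  move=> z; rewrite /B0 (bigD1 z) //= lerDl; exact: sumr_ge0.
have hB0 : 0 <= B0 by apply: sumr_ge0.
pose eta := eps / (4 * (N%:R + 1)).
have eta0 : 0 < eta by apply: divr_gt0; lra.
have etaN : (N%:R + 1) * eta = eps / 4.
  have hN1 : N%:R + 1 != 0 :> R by apply: lt0r_neq0; lra.
  by rewrite /eta; field.
pose T := 7 * B0 + `|ln (eta / NY%:R)|.
have hT : 2 * B0 <= T.
  have := normr_ge0 (ln (eta / NY%:R)); rewrite /T; lra.
have hexp : NY%:R * expR (5 * B0 - T) <= eta.
  have h1 : expR (5 * B0 - T) <= eta / NY%:R.
    have hpos : 0 < eta / NY%:R by apply: divr_gt0.
    rewrite -[X in _ <= X](lnK hpos) ler_expR /T.
    have := ler_norm (- ln (eta / NY%:R)); rewrite normrN; lra.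
  have e : NY%:R * (eta / NY%:R) = eta.
    by rewrite mulrC divfK //; apply: lt0r_neq0.
  by rewrite -[X in _ <= X]e; apply: ler_wpM2l => //; apply: ltW.
have wb := weight_bounds hL hT hc.
exists (@Theta R n m dX dY x0 y0 ist L T) => x.
pose w := rbm_weight (@Theta R n m dX dY x0 y0 ist L T).
have wq : forall z, q z <= w z <= q z + eta.
  move=> z; have : expR (L z) <= w z <= expR (L z) + NY%:R * expR (5 * B0 - T) := wb z.
  rewrite /L lnK ?posrE //.
  case/andP => h1 h2; rewrite h1 /=; lra.
pose W := \sum_z w z.
have W1 : 1 <= W by rewrite -qsum; apply: ler_sum => z _; case/andP: (wq z).
have WN : W <= 1 + N%:R * eta.
  have h : W <= \sum_z (q z + eta) by apply: ler_sum => z _; case/andP: (wq z).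
  by rewrite big_split /= qsum sumr_const -mulr_natl in h.
have wpos : forall z, 0 <= w z by move=> z; apply: ltW; exact: weight_pos.
have wW : w x <= W by rewrite /W (bigD1 x) //= lerDl; exact: sumr_ge0.
have -> : rbm (@Theta R n m dX dY x0 y0 ist L T) x = w x / W by [].
set r := w x / W.
have W0 : W != 0 by apply: lt0r_neq0; lra.
have rW : r * W = w x by rewrite /r divfK.
have r0 : 0 <= r by apply: divr_ge0 => //; lra.
have r1 : r <= 1 by rewrite /r ler_pdivrMr ?mul1r //; lra.
set u := N%:R * eta.
have u0 : 0 <= u by apply: mulr_ge0; lra.
have e1 : r * 1 <= r * W by apply: ler_wpM2l.
have e2 : r * W <= r * (1 + u) by apply: ler_wpM2l => //; lra.
have e3 : r * u <= 1 * u by apply: ler_wpM2r.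
rewrite mulr1 in e1; rewrite mulrDr mulr1 in e2; rewrite mul1r in e3.
rewrite rW in e1 e2.
rewrite mulrDl mul1r -/u in etaN.
case/andP: (wq x) => wq1 wq2; case/andP: (hpq x) => hp1 hp2.
rewrite ltr_norml; apply/andP; split; lra.
Qed.
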